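(* (Hyperdense coding and superadditivity in hypersphere theories.) Let $N\ge1$, $n=2^N-1$, and consider the bipartite hypersphere theory with joint state space $\Omega_{AB}$, effects $\mathcal E_{AB}$ and allowed local transformations the convex hull of $\{T_\mu\}$, as defined in the context. In the dense coding protocol where Alice and Bob share $\phi_{\mathbf 0}$, Alice encodes $x\in\{0,1\}^N$ by applying $T_x$ and Bob measures $\{E_y\}_{y\in\{0,1\}^N}$, one has $p(y|x)=\delta_{y,x}$. Consequently $$\chi_C(\Omega_{AB})\ge\chi_{DC}(\Omega_{AB})\ge N,$$ whereas $\chi_C(\Omega_A)=\chi_C(\Omega_B)=1$. In particular for $N\ge3$ the protocol is hyperdense ($\chi_{DC}>2\chi_C(\Omega_A)$) and the classical capacity is superadditive: $\chi_C(\Omega_{AB})>\chi_C(\Omega_A)+\chi_C(\Omega_B)$.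
   Context: The $n$-dimensional hypersphere theory has state space $\Omega_n=\{(1,r)^{\mathrm t}: r\in\mathbb R^n,\ \lVert r\rVert\le1\}$, unit effect $u=(1,\mathbf 0)^{\mathrm t}$, effects $\mathcal E=\{e:0\le e\cdot\omega\le1\ \forall\omega\in\Omega_n\}$; here $\Omega_A=\Omega_B=\Omega_n$. Bipartite states are real $2^N\times2^N$ matrices, identified with $\mathbb R^{2^N}\otimes\mathbb R^{2^N}$ via $v\otimes w=vw^{\mathrm t}$, inner product $X\cdot Y=\mathrm{Tr}(X^{\mathrm t}Y)$; $\Omega_A\otimes_{\min}\Omega_B$ is the convex hull of product states. Coordinates of $\mathbb R^{2^N}$ are indexed by $\nu\in\{0,1\}^N$, with $\nu=\mathbf 0$ the first coordinate. For $\mu\in\{0,1\}^N$, $(d_\mu)_\nu=(-1)^{\mu\cdot\nu}$ ($\mu\cdot\nu$ = inner product mod 2); $\phi_\mu=\mathrm{diag}(d_\mu)$; $\Omega_{AB}=$ convex hull of $\Omega_A\otimes_{\min}\Omega_B\cup\{\phi_\mu\}$; $\mathcal E_{AB}=\{E:0\le E\cdot\phi\le1\ \forall\phi\in\Omega_{AB}\}$; $E_\mu=2^{-N}\phi_\mu$; $T_\mu=\phi_\mu$ acting on $A$ by $\phi\mapsto T_\mu\phi$. Classical capacity $\chi_C(\Omega)$ of a state space with effect set: supremum of $I(X:Y)$ over finite message distributions $p_x$, states $\omega_x\in\Omega$ and measurements (finite families of effects summing to the unit) with $p(y|x)=e_y\cdot\omega_x$. Dense coding protocol with initial state $\phi$: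 message distribution $p_x$, allowed local transformations $T_x$ on $A$, measurement $\{E_y\}\subset\mathcal E_{AB}$, $p(y|x)=E_y\cdot(T_x\phi)$; $\chi_{DC}(\Omega_{AB})$ is the supremum of $I(X:Y)$ over all such protocols and initial states. *)

(* Defs.v *)
From HB Require Import structures.
From Stdlib Require Import Reals.
From mathcomp Require Import all_boot.

Set Implicit Arguments.
Unset Strict Implicit.
Unset Printing Implicit Defensive.

Local Open Scope R_scope.

Lemma Rplus_assoc' : associative Rplus.
Proof. by move=> x y z; rewrite Rplus_assoc. Qed.
Lemma Rplus_comm' : commutative Rplus.
Proof. exact: Rplus_comm. Qed.
Lemma Rplus_0_l' : left_id 0 Rplus.
Proof. exact: Rplus_0_l. Qed.

HB.instance Definition _ :=
  Monoid.isComLaw.Build R 0 Rplus Rplus_assoc' Rplus_comm' Rplus_0_l'.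

Definition sumR {T : finType} (f : T -> R) : R := \big[Rplus/0]_(i : T) f i.

Definition fdot {T : finType} (f g : T -> R) : R := sumR (fun i => f i * g i).

Definition conv {A : Type} (S : (A -> R) -> Prop) (x : A -> R) : Prop :=
  exists (k : nat) (l : 'I_k -> R) (s : 'I_k -> A -> R),
    (forall i, 0 <= l i) /\ sumR l = 1 /\ (forall i, S (s i)) /\
    (forall a, x a = sumR (fun i => l i * s i a)).

(* coordinates of R^(2^N) indexed by nu in {0,1}^N *)
Definition idx (N : nat) := {ffun 'I_N -> bool}.
Definition zero_idx (N : nat) : idx N := [ffun _ => false].
Definition vec (N : nat) := idx N -> R.
Definition mat (N : nat) := (idx N * idx N)%type -> R.

(* mu . nu (its parity is what matters; we use (-1)^(count)) *)
Definition bdot (N : nat) (mu nu : idx N) : nat := #|[set i | mu i && nu i]|.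
Definition dvec (N : nat) (mu : idx N) : vec N := fun nu => (-1) ^ (bdot mu nu).

Definition Omega (N : nat) (v : vec N) : Prop :=
  v (zero_idx N) = 1 /\
  sumR (fun i => if i == zero_idx N then 0 else (v i) ^ 2) <= 1.

Definition unit_vec (N : nat) : vec N := fun i => if i == zero_idx N then 1 else 0.

Definition Effect (N : nat) (e : vec N) : Prop :=
  forall w, Omega w -> 0 <= fdot e w <= 1.

Definition tensor (N : nat) (v w : vec N) : mat N := fun ij => v ij.1 * w ij.2.

Definition phi (N : nat) (mu : idx N) : mat N :=
  fun ij => if ij.1 == ij.2 then dvec mu ij.1 else 0.

Definition MinTensor (N : nat) (X : mat N) : Prop :=
  conv (fun Y => exists v w, Omega v /\ Omega w /\ Y = tensor v w) X.

Definition OmegaAB (N : nat) (X : mat N) : Prop :=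
  conv (fun Y => MinTensor Y \/ exists mu : idx N, Y = phi mu) X.

(* Tr(X^t Y) *)
Definition mdot (N : nat) (X Y : mat N) : R := fdot X Y.

Definition EffectAB (N : nat) (E : mat N) : Prop :=
  forall X, OmegaAB X -> 0 <= mdot E X <= 1.

Definition unitAB (N : nat) : mat N := tensor (@unit_vec N) (@unit_vec N).

Definition Emu (N : nat) (mu : idx N) : mat N := fun ij => / 2 ^ N * phi mu ij.

Definition Tmu (N : nat) (mu : idx N) : mat N := phi mu.
Definition AllowedT (N : nat) (T : mat N) : Prop :=
  conv (fun T' => exists mu : idx N, T' = Tmu mu) T.

Definition applyA (N : nat) (T X : mat N) : mat N :=
  fun ij => sumR (fun k : idx N => T (ij.1, k) * X (k, ij.2)).

Definition is_distr (k : nat) (p : 'I_k -> R) : Prop :=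
  (forall x, 0 <= p x) /\ sumR p = 1.

Definition log2 (x : R) : R := ln x / ln 2.

(* I(X:Y) in bits for p(x) and channel q x y = p(y|x); 0 log 0 = 0 *)
Definition MI (k m : nat) (p : 'I_k -> R) (q : 'I_k -> 'I_m -> R) : R :=
  sumR (fun x => sumR (fun y =>
    let j := p x * q x y in
    if Rlt_dec 0 j then j * log2 (q x y / sumR (fun x' => p x' * q x' y)) else 0)).

Definition achC {A : finType} (S : (A -> R) -> Prop) (Eff : (A -> R) -> Prop)
  (u : A -> R) (c : R) : Prop :=
  exists (k m : nat) (p : 'I_k -> R) (w : 'I_k -> A -> R) (e : 'I_m -> A -> R),
    is_distr p /\ (forall x, S (w x)) /\ (forall y, Eff (e y)) /\
    (forall a, sumR (fun y => e y a) = u a) /\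
    c = MI p (fun x y => fdot (e y) (w x)).

Definition achC_A (N : nat) := achC (@Omega N) (@Effect N) (@unit_vec N).
Definition achC_AB (N : nat) := achC (@OmegaAB N) (@EffectAB N) (@unitAB N).

Definition achDC (N : nat) (c : R) : Prop :=
  exists phi0 : mat N, OmegaAB phi0 /\
  exists (k m : nat) (p : 'I_k -> R) (T : 'I_k -> mat N) (E : 'I_m -> mat N),
    is_distr p /\ (forall x, AllowedT (T x)) /\ (forall y, EffectAB (E y)) /\
    (forall a, sumR (fun y => E y a) = @unitAB N a) /\
    c = MI p (fun x y => mdot (E y) (applyA (T x) phi0)).

(* Main.v *)
Require Import Defs.
From HB Require Import structures.
From Stdlib Require Import Reals.
From mathcomp Require Import all_boot.
From Stdlib Require Import Lra Psatz FunctionalExtensionality.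

Local Open Scope R_scope.


Section SumLemmas.
Variable T : finType.

Lemma sumR_ext (f g : T -> R) : (forall i, f i = g i) -> sumR f = sumR g.
Proof. by move=> H; apply: eq_bigr => i _; apply: H. Qed.

Lemma sumR_add (f g : T -> R) : sumR (fun i => f i + g i) = sumR f + sumR g.
Proof. by rewrite /sumR big_split. Qed.

Lemma sumR_scal (c : R) (f : T -> R) : sumR (fun i => c * f i) = c * sumR f.
Proof.
rewrite /sumR; apply: (big_rec2 (fun a b => a = c * b)); first by ring.
by move=> i y1 y2 _ ->; ring.
Qed.

Lemma sumR_scalr (c : R) (f : T -> R) : sumR (fun i => f i * c) = sumR f * c.
Proof. rewrite (sumR_ext (fun i => f i * c) (fun i => c * f i)); last by move=> i; ring.
by rewrite sumR_scal; ring. Qed.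

Lemma sumR_le (f g : T -> R) : (forall i, f i <= g i) -> sumR f <= sumR g.
Proof.
move=> H; rewrite /sumR; apply: (big_rec2 (fun a b => a <= b)); first lra.
by move=> i y1 y2 _ Hy; have := H i; lra.
Qed.

Lemma sumR_ge0 (f : T -> R) : (forall i, 0 <= f i) -> 0 <= sumR f.
Proof.
move=> H; rewrite /sumR; apply: (big_rec (fun a => 0 <= a)); first lra.
by move=> i y _ Hy; have := H i; lra.
Qed.

Lemma sumR_D1 (i0 : T) (f : T -> R) :
  sumR f = f i0 + \big[Rplus/0]_(i | i != i0) f i.
Proof. by rewrite /sumR (bigD1 i0). Qed.

Lemma sumR_one (i0 : T) (f : T -> R) : (forall i, i != i0 -> f i = 0) -> sumR f = f i0.
Proof.
move=> H; rewrite (sumR_D1 i0) big1; first by ring.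
by move=> i Hi; apply: H.
Qed.

Lemma sumR_two (i0 i1 : T) (f : T -> R) : i1 != i0 ->
  (forall i, i != i0 -> i != i1 -> f i = 0) -> sumR f = f i0 + f i1.
Proof.
move=> H01 H; rewrite (sumR_D1 i0) (bigD1 i1) //= big1; first by ring.
by move=> i /andP [Hi Hj]; apply: H.
Qed.

Lemma sumR_single_le (i0 : T) (f : T -> R) : (forall i, 0 <= f i) -> f i0 <= sumR f.
Proof.
move=> H; rewrite (sumR_D1 i0).
have: 0 <= \big[Rplus/0]_(i | i != i0) f i.
  apply: (big_rec (fun a => 0 <= a)); first lra.
  by move=> i y _ Hy; have := H i; lra.
lra.
Qed.

Lemma sumR_const (c : R) : sumR (fun _ : T => c) = INR #|T| * c.
Proof.
rewrite /sumR big_const cardE; elim: (size (enum T)) => [|n IH]; first by rewrite /=; ring.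
by rewrite iterS IH S_INR; ring.
Qed.

Lemma sumR_opp_inv (f : T -> R) (h : T -> T) : injective h ->
  (forall i, f (h i) = - f i) -> sumR f = 0.
Proof.
move=> Hh Hf.
have E : sumR f = sumR (fun i => f (h i)) by rewrite /sumR (reindex_inj Hh).
have E2 : sumR (fun i => f (h i)) = - 1 * sumR f.
  by rewrite -sumR_scal; apply: sumR_ext => i; rewrite Hf; ring.
lra.
Qed.
End SumLemmas.
Arguments sumR_ext {T}.
Arguments sumR_add {T}.
Arguments sumR_scal {T}.
Arguments sumR_scalr {T}.
Arguments sumR_le {T}.
Arguments sumR_ge0 {T}.
Arguments sumR_D1 {T}.
Arguments sumR_one {T}.
Arguments sumR_two {T}.
Arguments sumR_single_le {T}.
Arguments sumR_const {T}.
Arguments sumR_opp_inv {T}.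

Lemma sumR_swap (I J : finType) (F : I -> J -> R) :
  sumR (fun i => sumR (fun j => F i j)) = sumR (fun j => sumR (fun i => F i j)).
Proof. by rewrite /sumR exchange_big. Qed.

Lemma sumR_pair (I J : finType) (F : I * J -> R) :
  sumR F = sumR (fun i => sumR (fun j => F (i, j))).
Proof. by rewrite /sumR pair_bigA; apply: eq_bigr => -[]. Qed.

Lemma sumR_enum (T : finType) (F : T -> R) :
  sumR (fun i : 'I_#|T| => F (enum_val i)) = sumR F.
Proof. by rewrite /sumR (big_enum_val (A := T)). Qed.


Definition flip (N : nat) (k : 'I_N) (nu : idx N) : idx N :=
  [ffun i => if i == k then ~~ nu i else nu i].
Definition xorv (N : nat) (mu nu : idx N) : idx N := [ffun i => mu i != nu i].

Arguments flip {N}.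
Arguments xorv {N}.

Lemma m1pow_add (b : bool) (m : nat) :
  (-1) ^ (b + m)%N = (if b then -1 else 1) * (-1) ^ m.
Proof. by case: b; rewrite /= ?add0n ?add1n /=; ring. Qed.

Lemma m1pow_addn (a b : nat) : (-1) ^ (a + b)%N = (-1) ^ a * (-1) ^ b.
Proof. by rewrite -plusE pow_add. Qed.

Lemma m1pow_dbl (d : nat) : (-1) ^ (d + d)%N = 1.
Proof. rewrite m1pow_addn -Rpow_mult_distr; have -> : (-1) * (-1) = 1 by ring. by rewrite pow1. Qed.

Lemma dvec_flip (N : nat) (k : 'I_N) (mu nu : idx N) : mu k ->
  dvec mu (flip k nu) = - dvec mu nu.
Proof.
move=> Hk; rewrite /dvec /bdot.
set A := [set i | mu i && nu i].
set A' := [set i | mu i && flip k nu i].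
have EA : A' :\ k = A :\ k.
  apply/setP => i; rewrite !inE /flip ffunE; by case: eqP.
rewrite (cardsD1 k A) (cardsD1 k A') EA !m1pow_add !inE /flip ffunE eqxx Hk /=.
by case: (nu k) => /=; ring.
Qed.

Lemma bdot_sym (N : nat) (mu nu : idx N) : bdot mu nu = bdot nu mu.
Proof. by rewrite /bdot; apply: eq_card => i; rewrite !inE andbC. Qed.

Lemma dvec_sym (N : nat) (mu nu : idx N) : dvec mu nu = dvec nu mu.
Proof. by rewrite /dvec bdot_sym. Qed.

Lemma dvec_zero (N : nat) (nu : idx N) : dvec (zero_idx N) nu = 1.
Proof.
rewrite /dvec /bdot.
have -> : [set i | zero_idx N i && nu i] = set0 by apply/setP => i; rewrite !inE ffunE.
by rewrite cards0.
Qed.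

Lemma dvec_xor (N : nat) (x y v : idx N) : dvec x v * dvec y v = dvec (xorv x y) v.
Proof.
rewrite /dvec /bdot.
set A := [set i | x i && v i].
set B := [set i | y i && v i].
set C := [set i | xorv x y i && v i].
have H1 := cardsUI A B.
have H2 := cardsID (A :&: B) (A :|: B).
have E1 : (A :|: B) :&: (A :&: B) = A :&: B.
  apply/setP => i; rewrite !inE; by case: (x i); case: (y i); case: (v i).
have E2 : (A :|: B) :\: (A :&: B) = C.
  apply/setP => i; rewrite !inE /xorv ffunE; by case: (x i); case: (y i); case: (v i).
rewrite E1 E2 in H2.
have H : (#|A| + #|B| = #|C| + (#|A :&: B| + #|A :&: B|))%N.
  by rewrite -H1 -H2 [(#|A :&: B| + _)%N]addnC -addnA.
by rewrite -m1pow_addn H m1pow_addn m1pow_dbl; ring.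
Qed.

Lemma xorvv (N : nat) (x : idx N) : xorv x x = zero_idx N.
Proof. by apply/ffunP => i; rewrite !ffunE eqxx. Qed.

Lemma xorv0 (N : nat) (x : idx N) : xorv x (zero_idx N) = x.
Proof. by apply/ffunP => i; rewrite !ffunE; case: (x i). Qed.

Lemma xorv_eq0 (N : nat) (x y : idx N) : (xorv x y == zero_idx N) = (x == y).
Proof.
apply/eqP/eqP => [H|->]; last exact: xorvv.
apply/ffunP => i; have := congr1 (fun f : idx N => f i) H; rewrite !ffunE.
by case: (x i); case: (y i).
Qed.

Lemma dvec_sq (N : nat) (x v : idx N) : dvec x v * dvec x v = 1.
Proof. by rewrite dvec_xor xorvv dvec_zero. Qed.

Lemma card_idx (N : nat) : INR #|idx N| = 2 ^ N.
Proof.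
rewrite /idx card_ffun card_bool card_ord.
elim: N => [|n IH]; first by [].
by rewrite expnS -multE mult_INR IH /=.
Qed.

Lemma flip_inj (N : nat) (k : 'I_N) : injective (flip k).
Proof.
apply: (can_inj (g := flip k)) => nu; apply/ffunP => i; rewrite !ffunE.
by case: eqP => // _; rewrite negbK.
Qed.

Lemma sum_dvec (N : nat) (mu : idx N) :
  sumR (dvec mu) = if mu == zero_idx N then 2 ^ N else 0.
Proof.
case: eqP => [->|Hne].
  rewrite (sumR_ext (dvec (zero_idx N)) (fun _ => 1)); last exact: dvec_zero.
  by rewrite sumR_const card_idx; ring.
have [k Hk] : exists k, mu k.
  apply/existsP; apply: contraT; rewrite negb_exists => /forallP H.
  case: Hne; apply/ffunP => i; rewrite ffunE; exact/negbTE/H.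
apply: (sumR_opp_inv _ (flip k)); first exact: flip_inj.
by move=> nu; apply: dvec_flip.
Qed.

Lemma dvec_orth (N : nat) (x y : idx N) :
  sumR (fun i => dvec x i * dvec y i) = if x == y then 2 ^ N else 0.
Proof.
rewrite (sumR_ext _ (dvec (xorv x y))); last by move=> i; rewrite dvec_xor.
by rewrite sum_dvec xorv_eq0.
Qed.


Lemma sum_diag (N : nat) (f : idx N -> R) (g : idx N * idx N -> R) :
  sumR (fun ij : idx N * idx N => (if ij.1 == ij.2 then f ij.1 else 0) * g ij) =
  sumR (fun i => f i * g (i, i)).
Proof.
rewrite sumR_pair; apply: sumR_ext => i /=.
rewrite (sumR_one i) /= ?eqxx //.
by move=> j Hj; rewrite eq_sym (negbTE Hj); ring.
Qed.

Lemma applyA_phi (N : nat) (mu : idx N) (Y : mat N) ij :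
  applyA (phi mu) Y ij = dvec mu ij.1 * Y ij.
Proof.
case: ij => i j; rewrite /applyA /= (sumR_one i) /phi /= ?eqxx //.
by move=> k Hk; rewrite eq_sym (negbTE Hk); ring.
Qed.

Lemma phi_mul (N : nat) (mu nu : idx N) : applyA (phi mu) (phi nu) = phi (xorv mu nu).
Proof.
apply: functional_extensionality => -[i j]; rewrite applyA_phi /phi /=.
case: (i == j); last by ring.
by rewrite dvec_xor.
Qed.

Lemma mdot_Emu_phi (N : nat) (y x : idx N) :
  mdot (Emu y) (phi x) = if y == x then 1 else 0.
Proof.
rewrite /mdot /fdot.
rewrite (sumR_ext _ (fun ij : idx N * idx N =>
   (if ij.1 == ij.2 then / 2 ^ N * dvec y ij.1 else 0) * phi x ij)); last first.
  by move=> ij; rewrite /Emu /phi; case: (ij.1 == ij.2); ring.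
rewrite (sum_diag N (fun i => / 2 ^ N * dvec y i)).
rewrite (sumR_ext _ (fun i => / 2 ^ N * (dvec y i * dvec x i))); last first.
  by move=> i; rewrite /phi /= eqxx; ring.
rewrite sumR_scal dvec_orth; case: (y == x); last by ring.
by field; apply: pow_nonzero; lra.
Qed.

Lemma protocol_delta (N : nat) (x y : idx N) :
  mdot (Emu y) (applyA (Tmu x) (phi (zero_idx N))) = if x == y then 1 else 0.
Proof. by rewrite /Tmu phi_mul xorv0 mdot_Emu_phi eq_sym. Qed.

Lemma Emu_sum (N : nat) a : sumR (fun y : idx N => Emu y a) = @unitAB N a.
Proof.
case: a => i j; rewrite /Emu /unitAB /tensor /unit_vec /phi /=.
case: eqP => [<-|Hij].
  rewrite sumR_scal (sumR_ext _ (dvec i)); last by move=> y; rewrite dvec_sym.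
  rewrite sum_dvec; case: (i == zero_idx N); last by ring.
  by field; apply: pow_nonzero; lra.
rewrite (sumR_ext _ (fun _ => 0)); last by move=> y; ring.
rewrite sumR_const; case: eqP => [Ei|Ni]; case: eqP => [Ej|Nj]; try ring.
by case: Hij; rewrite Ei Ej.
Qed.

Lemma fdot_conv {A : finType} (E X : A -> R) k (l : 'I_k -> R) (s : 'I_k -> A -> R) :
  (forall a, X a = sumR (fun i => l i * s i a)) ->
  fdot E X = sumR (fun i => l i * fdot E (s i)).
Proof.
move=> HX; rewrite /fdot.
rewrite (sumR_ext _ (fun a => sumR (fun i => l i * (E a * s i a)))); last first.
  by move=> a; rewrite HX -sumR_scal; apply: sumR_ext => i; ring.
rewrite sumR_swap; apply: sumR_ext => i; by rewrite sumR_scal.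
Qed.

Lemma conv_bound {A : finType} (S : (A -> R) -> Prop) (E : A -> R) lo hi X :
  (forall Y, S Y -> lo <= fdot E Y <= hi) -> conv S X -> lo <= fdot E X <= hi.
Proof.
move=> HS [k [l [s [Hl [Hsum [Hs HX]]]]]].
rewrite (fdot_conv E X k l s HX).
have E1 : sumR (fun i => l i * lo) = lo by rewrite sumR_scalr Hsum; ring.
have E2 : sumR (fun i => l i * hi) = hi by rewrite sumR_scalr Hsum; ring.
split.
  rewrite -[X in X <= _]E1; apply: sumR_le => i; have := HS _ (Hs i); have := Hl i; nra.
rewrite -[X in _ <= X]E2; apply: sumR_le => i; have := HS _ (Hs i); have := Hl i; nra.
Qed.

Lemma conv_fin {A : Type} {I : finType} (S : (A -> R) -> Prop) (l : I -> R)
  (s : I -> A -> R) X :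
  (forall i, 0 <= l i) -> sumR l = 1 -> (forall i, S (s i)) ->
  (forall a, X a = sumR (fun i => l i * s i a)) -> conv S X.
Proof.
move=> Hl Hsum Hs HX.
exists #|I|, (fun i => l (enum_val i)), (fun i => s (enum_val i)).
split; first by move=> i; apply: Hl.
split; first by rewrite (sumR_enum _ (fun i => l i)).
split; first by move=> i; apply: Hs.
by move=> a; rewrite HX (sumR_enum _ (fun i => l i * s i a)).
Qed.

Lemma pow2_ge2 (N : nat) : (0 < N)%nat -> 2 <= 2 ^ N.
Proof.
case: N => [//|n] _ /=.
have : 1 <= 2 ^ n by apply: pow_R1_Rle; lra.
lra.
Qed.

Lemma prod_bound (N : nat) (y : idx N) (v w : vec N) : Omega v -> Omega w ->
  0 <= sumR (fun i => dvec y i * v i * w i) <= 2.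
Proof.
move=> [Hv0 Hv] [Hw0 Hw].
set ind := fun i : idx N => if i == zero_idx N then 1 else 0.
set V := fun i : idx N => if i == zero_idx N then 0 else v i ^ 2.
set W := fun i : idx N => if i == zero_idx N then 0 else w i ^ 2.
have Hind : sumR ind = 1.
  by rewrite /ind (sumR_one (zero_idx N)) ?eqxx // => i /negbTE ->.
have Ht : forall i, ind i - (V i + W i) / 2 <= dvec y i * v i * w i <= ind i + (V i + W i) / 2.
  move=> i; rewrite /ind /V /W; case: eqP => [->|_].
    rewrite Hv0 Hw0 dvec_sym dvec_zero; lra.
  have Hd := dvec_sq _ y i.
  have Hw2 : dvec y i * dvec y i * (w i * w i) = w i * w i by rewrite Hd; ring.
  have h1 : 0 <= (v i - dvec y i * w i) * (v i - dvec y i * w i) by apply: Rle_0_sqr.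
  have h2 : 0 <= (v i + dvec y i * w i) * (v i + dvec y i * w i) by apply: Rle_0_sqr.
  simpl; split; nra.
have HS1 := sumR_le _ _ (fun i => proj1 (Ht i)).
have HS2 := sumR_le _ _ (fun i => proj2 (Ht i)).
have E1 : sumR (fun i => ind i - (V i + W i) / 2) = sumR ind - (sumR V + sumR W) / 2.
  rewrite (sumR_ext (fun i => ind i - (V i + W i) / 2) (fun i => ind i + (- / 2) * (V i + W i))); last by move=> i; field.
  rewrite sumR_add sumR_scal sumR_add; field.
have E2 : sumR (fun i => ind i + (V i + W i) / 2) = sumR ind + (sumR V + sumR W) / 2.
  rewrite (sumR_ext (fun i => ind i + (V i + W i) / 2) (fun i => ind i + (/ 2) * (V i + W i))); last by move=> i; field.
  rewrite sumR_add sumR_scal sumR_add; field.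
have V0 : 0 <= sumR V by apply: sumR_ge0 => i; rewrite /V; case: eqP => _; nra.
have W0 : 0 <= sumR W by apply: sumR_ge0 => i; rewrite /W; case: eqP => _; nra.
rewrite E1 in HS1; rewrite E2 in HS2.
have HV : sumR V <= 1 by exact: Hv.
have HW : sumR W <= 1 by exact: Hw.
split; lra.
Qed.

Lemma mdot_Emu_tensor (N : nat) (y : idx N) (v w : vec N) :
  mdot (Emu y) (tensor v w) = / 2 ^ N * sumR (fun i => dvec y i * v i * w i).
Proof.
rewrite /mdot /fdot.
rewrite (sumR_ext _ (fun ij : idx N * idx N =>
   (if ij.1 == ij.2 then / 2 ^ N * dvec y ij.1 else 0) * tensor v w ij)); last first.
  by move=> ij; rewrite /Emu /phi; case: (ij.1 == ij.2); ring.
rewrite (sum_diag N (fun i => / 2 ^ N * dvec y i)) -sumR_scal; apply: sumR_ext => i; rewrite /tensor /=; ring.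
Qed.

Lemma Emu_effect (N : nat) (hN : (0 < N)%nat) (y : idx N) : EffectAB (Emu y).
Proof.
move=> X HX; rewrite /mdot.
apply: (conv_bound _ _ _ _ _ _ HX) => Y [HY|[mu ->]]; last first.
  by rewrite -/(mdot _ _) mdot_Emu_phi; case: (y == mu); lra.
apply: (conv_bound _ _ _ _ _ _ HY) => Z [v [w [Hv [Hw ->]]]].
rewrite -/(mdot _ _) mdot_Emu_tensor.
have := prod_bound _ y _ _ Hv Hw; have := pow2_ge2 _ hN => H2 Hb.
have Hi : 0 < / 2 ^ N by apply: Rinv_0_lt_compat; lra.
split; first nra.
have : / 2 ^ N * 2 ^ N = 1 by field; lra.
nra.
Qed.


Definition Base {N : nat} (Y : mat N) : Prop := MinTensor Y \/ exists mu : idx N, Y = phi mu.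

Lemma Base_phi (N : nat) (mu : idx N) (Y : mat N) : Base Y -> Base (applyA (phi mu) Y).
Proof.
move=> [HY|[nu ->]]; last by right; exists (xorv mu nu); rewrite phi_mul.
left; case: HY => [k [l [s [Hl [Hsum [Hs HY]]]]]].
exists k, l, (fun i => applyA (phi mu) (s i)).
split; first exact: Hl.
split; first exact: Hsum.
split.
  move=> i; case: (Hs i) => [v [w [[Hv0 Hv] [Hw ->]]]].
  exists (fun t => dvec mu t * v t), w.
  split; last split => //.
    split; first by rewrite Hv0 dvec_sym dvec_zero; ring.
    rewrite (sumR_ext _ (fun i => if i == zero_idx N then 0 else v i ^ 2)) //.
    move=> t; case: (t == zero_idx N) => //.
    have := dvec_sq _ mu t; move=> Hd.
    have -> : (dvec mu t * v t) ^ 2 = (dvec mu t * dvec mu t) * v t ^ 2 by ring.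
    by rewrite Hd; ring.
  apply: functional_extensionality => a; rewrite applyA_phi /tensor; ring.
move=> a; rewrite applyA_phi HY -sumR_scal; apply: sumR_ext => i.
rewrite applyA_phi; ring.
Qed.

Lemma sumR_mul (I J : finType) (f : I -> R) (g : J -> R) :
  sumR f * sumR g = sumR (fun a => sumR (fun b => f a * g b)).
Proof.
rewrite -sumR_scalr; apply: sumR_ext => a; by rewrite sumR_scal.
Qed.

Lemma OmegaAB_apply (N : nat) (T X : mat N) : AllowedT T -> OmegaAB X ->
  OmegaAB (applyA T X).
Proof.
move=> [k1 [l1 [t1 [Hl1 [Hs1 [Ht1 HT]]]]]] [k2 [l2 [s2 [Hl2 [Hs2 [Hb2 HX]]]]]].
apply: (conv_fin _ (fun p : 'I_k1 * 'I_k2 => l1 p.1 * l2 p.2)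
          (fun p => applyA (t1 p.1) (s2 p.2))).
- by move=> p; apply: Rmult_le_pos.
- by rewrite sumR_pair -(sumR_mul _ _ l1 l2) Hs1 Hs2; ring.
- move=> p; case: (Ht1 p.1) => mu ->; apply: Base_phi; exact: Hb2.
move=> [i j]; rewrite sumR_pair /applyA /=.
rewrite (sumR_ext _ (fun c => sumR (fun a => sumR (fun b =>
            (l1 a * t1 a (i, c)) * (l2 b * s2 b (c, j)))))); last first.
  by move=> c; rewrite HT HX sumR_mul.
rewrite sumR_swap; apply: sumR_ext => a.
rewrite sumR_swap; apply: sumR_ext => b.
rewrite -sumR_scal; apply: sumR_ext => c.
have E4 : forall x y z w : R, x * y * (z * w) = x * z * (y * w) by move=> *; ring.
exact: E4.
Qed.

Lemma achDC_achC (N : nat) c : achDC N c -> achC_AB N c.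
Proof.
move=> [phi0 [Hphi0 [k [m [p [T [E [Hp [HT [HE [Hsum Hc]]]]]]]]]]].
exists k, m, p, (fun x => applyA (T x) phi0), E.
split => //; split; first by move=> x; apply: OmegaAB_apply.
by split.
Qed.

Lemma ln2_pos : 0 < ln 2.
Proof. have := ln_lt_2; lra. Qed.

Lemma MI_perfect (k : nat) (p : 'I_k -> R) (q : 'I_k -> 'I_k -> R) :
  (0 < k)%nat -> (forall x, p x = / INR k) ->
  (forall x y, q x y = if x == y then 1 else 0) -> MI p q = log2 (INR k).
Proof.
move=> hk Hp Hq.
have Hk : 0 < INR k by apply: lt_0_INR; apply/ltP.
have HP : forall y, sumR (fun x' => p x' * q x' y) = / INR k.
  move=> y; rewrite (sumR_one y) ?Hp ?Hq ?eqxx; first by ring.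
  by move=> x Hx; rewrite Hq (negbTE Hx); ring.
rewrite /MI (sumR_ext _ (fun _ => / INR k * log2 (INR k))).
  by rewrite sumR_const card_ord; field; lra.
move=> x; rewrite (sumR_one x).
  rewrite HP Hp Hq eqxx.
  case: Rlt_dec => H; last by exfalso; apply: H; have := Rinv_0_lt_compat _ Hk; lra.
  have -> : 1 / / INR k = INR k by field; lra.
  rewrite /=; ring.
move=> y Hy; rewrite Hq eq_sym (negbTE Hy).
case: Rlt_dec => H /=; [lra | done].
Qed.

Lemma log2_pow2 (N : nat) : log2 (2 ^ N) = INR N.
Proof. rewrite /log2 ln_pow; last lra. have H := ln2_pos. field; lra. Qed.

Lemma achDC_N (N : nat) (hN : (0 < N)%nat) : achDC N (INR N).
Proof.
exists (phi (zero_idx N)); split.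
  exists 1%N, (fun _ => 1), (fun _ => phi (zero_idx N)).
  split; first by move=> _; lra.
  split; first by rewrite sumR_const card_ord /=; ring.
  split; first by move=> _; right; exists (zero_idx N).
  by move=> a; rewrite sumR_const card_ord /=; ring.
set K := #|idx N|.
have HK : INR K = 2 ^ N by rewrite /K card_idx.
have H2N := pow2_ge2 _ hN.
have hK : (0 < K)%nat.
  by rewrite /K card_ffun card_bool expn_gt0.
exists K, K, (fun _ => / INR K), (fun x => Tmu (enum_val x)), (fun y => Emu (enum_val y)).
split.
  split; first by move=> _; apply: Rlt_le; apply: Rinv_0_lt_compat; lra.
  rewrite sumR_const card_ord; field; lra.
split.
  move=> x; exists 1%N, (fun _ => 1), (fun _ => Tmu (enum_val x)).
  split; first by move=> _; lra.
  split; first by rewrite sumR_const card_ord /=; ring.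
  split; first by move=> _; exists (enum_val x).
  by move=> a; rewrite sumR_const card_ord /= !Rmult_1_l.
split; first by move=> y; apply: Emu_effect.
split; first by move=> a; rewrite (sumR_enum _ (fun y => Emu y a)) Emu_sum.
rewrite (MI_perfect K) //.
  by rewrite HK log2_pow2.
by move=> x y; rewrite protocol_delta (inj_eq enum_val_inj).
Qed.


Lemma ln_le_sub1 z : 0 < z -> ln z <= z - 1.
Proof. move=> Hz; have := exp_ineq1_le (ln z); rewrite exp_ln //; lra. Qed.

Lemma ln_le2 z : 0 < z -> z <= 2 -> ln z <= ln 2.
Proof.
move=> Hz H2; case: (Rle_lt_or_eq_dec _ _ H2) => [H|->]; last lra.
by apply: Rlt_le; apply: ln_increasing.
Qed.

Lemma MI_le1 k m (p : 'I_k -> R) (q : 'I_k -> 'I_m -> R) (a : 'I_m -> R) :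
  is_distr p -> (forall x y, 0 <= q x y) -> (forall x, sumR (q x) = 1) ->
  (forall x y, q x y <= 2 * a y) -> (forall y, 0 <= a y) -> sumR a = 1 ->
  MI p q <= 1.
Proof.
move=> [Hp0 Hp1] Hq0 Hq1 Hqa Ha0 Ha1.
set P := fun y => sumR (fun x => p x * q x y).
have Hln := ln2_pos.
have Hil : 0 < / ln 2 by apply: Rinv_0_lt_compat.
set g := fun x y => p x * q x y * (1 - / ln 2) + / ln 2 * (p x * q x y * (a y * / P y)).
have Hj0 : forall x y, 0 <= p x * q x y by move=> x y; apply: Rmult_le_pos.
have Hterm : forall x y,
  (let j := p x * q x y in
   if Rlt_dec 0 j then j * log2 (q x y / P y) else 0) <= g x y.
  move=> x y /=; rewrite /g.
  case: Rlt_dec => Hj /=; last first.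
    have -> : p x * q x y = 0 by have := Hj0 x y; lra.
    lra.
  have HPy : p x * q x y <= P y.
    by rewrite /P; apply: (sumR_single_le x (fun x => p x * q x y)) => x'; apply: Hj0.
  have Hqp : 0 < q x y.
    case: (Rle_lt_or_eq_dec _ _ (Hq0 x y)) => // H; rewrite -H in Hj; lra.
  have Hay : 0 < a y by have := Hqa x y; lra.
  have HP : 0 < P y by lra.
  have E1 : q x y / P y = (q x y / a y) * (a y / P y) by field; lra.
  have L1 : ln (q x y / a y) <= ln 2.
    apply: ln_le2; first by apply: Rdiv_lt_0_compat.
    rewrite /Rdiv; have -> : 2 = (2 * a y) * / a y by field; lra.
    apply: Rmult_le_compat_r; last exact: Hqa.
    by apply: Rlt_le; apply: Rinv_0_lt_compat.
  have L2 : ln (a y / P y) <= a y / P y - 1 by apply: ln_le_sub1; apply: Rdiv_lt_0_compat.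
  have L3 : ln (q x y / P y) <= ln 2 + (a y / P y - 1).
    rewrite E1 ln_mult; [lra | by apply: Rdiv_lt_0_compat | by apply: Rdiv_lt_0_compat].
  rewrite /log2.
  have L4 : p x * q x y * (ln (q x y / P y) / ln 2) <=
            p x * q x y * ((ln 2 + (a y / P y - 1)) / ln 2).
    apply: Rmult_le_compat_l; first lra.
    rewrite /Rdiv; apply: Rmult_le_compat_r; lra.
  apply: (Rle_trans _ _ _ L4); right; field; lra.
apply: (Rle_trans _ (sumR (fun x => sumR (fun y => g x y)))).
  apply: sumR_le => x; apply: sumR_le => y; exact: Hterm.
have S1 : sumR (fun x => sumR (fun y => p x * q x y)) = 1.
  rewrite -Hp1; apply: sumR_ext => x; by rewrite sumR_scal Hq1 Rmult_1_r.
have S2 : sumR (fun x => sumR (fun y => p x * q x y * (a y * / P y))) <= 1.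
  rewrite sumR_swap -Ha1; apply: sumR_le => y.
  rewrite sumR_scalr -/(P y).
  case: (Req_dec (P y) 0) => [->|HP]; first by have := Ha0 y; lra.
  right; field; exact: HP.
have E : sumR (fun x => sumR (fun y => g x y)) =
   sumR (fun x => sumR (fun y => p x * q x y)) * (1 - / ln 2) +
   / ln 2 * sumR (fun x => sumR (fun y => p x * q x y * (a y * / P y))).
  rewrite -sumR_scalr -sumR_scal -sumR_add; apply: sumR_ext => x.
  by rewrite -sumR_scalr -sumR_scal -sumR_add.
rewrite E S1; nra.
Qed.

Lemma unit_Omega (N : nat) : Omega (@unit_vec N).
Proof.
split; first by rewrite /unit_vec eqxx.
rewrite (sumR_ext _ (fun _ => 0)); first by rewrite sumR_const; lra.
by move=> i; rewrite /unit_vec; case: eqP => //= _; ring.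
Qed.

Lemma fdot_unit (N : nat) (e : vec N) : fdot e (@unit_vec N) = e (zero_idx N).
Proof.
rewrite /fdot (sumR_one (zero_idx N)) /unit_vec ?eqxx; first by ring.
by move=> i /negbTE ->; ring.
Qed.

Lemma effect_le2 (N : nat) (e w : vec N) : Effect e -> Omega w ->
  fdot e w <= 2 * e (zero_idx N).
Proof.
move=> He [Hw0 Hw].
set w' := fun i => if i == zero_idx N then 1 else - w i.
have Hw' : Omega w'.
  split; first by rewrite /w' eqxx.
  rewrite (sumR_ext _ (fun i => if i == zero_idx N then 0 else w i ^ 2)) //.
  by move=> i; rewrite /w'; case: eqP => _ //; ring.
have Esum : fdot e w + fdot e w' = 2 * e (zero_idx N).
  rewrite /fdot -sumR_add (sumR_one (zero_idx N)) /w' ?eqxx ?Hw0; first by ring.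
  by move=> i /negbTE ->; ring.
have := He _ Hw'; lra.
Qed.

Lemma achC_A_le1 (N : nat) c : achC_A N c -> c <= 1.
Proof.
move=> [k [m [p [w [e [Hp [Hw [He [Hsum ->]]]]]]]]].
apply: (MI_le1 _ _ _ _ (fun y => e y (zero_idx N))) => //.
- by move=> x y; case: (He y _ (Hw x)).
- move=> x; rewrite /fdot sumR_swap.
  rewrite (sumR_ext _ (fun i => w x i * @unit_vec N i)); last first.
    by move=> i; rewrite sumR_scalr Hsum Rmult_comm.
  rewrite -/(fdot _ _) fdot_unit.
  by case: (Hw x).
- by move=> x y; apply: effect_le2.
- by move=> y; rewrite -fdot_unit; case: (He y _ (unit_Omega N)).
- by rewrite Hsum /unit_vec eqxx.
Qed.


Definition sgn2 (x : 'I_2) : R := if x == ord0 then 1 else -1.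

Lemma sgn2_prod (x y : 'I_2) : sgn2 x * sgn2 y = if x == y then 1 else -1.
Proof.
rewrite /sgn2.
case: x => [[|[|n]] Hx] //; case: y => [[|[|n']] Hy] //=; ring.
Qed.

Lemma sgn2_sq (x : 'I_2) : sgn2 x * sgn2 x = 1.
Proof. by rewrite sgn2_prod eqxx. Qed.

Lemma achC_A_one (N : nat) (hN : (0 < N)%nat) : achC_A N 1.
Proof.
set e : idx N := [ffun _ => true].
have He0 : e != zero_idx N.
  apply/eqP => H; have := congr1 (fun f : idx N => f (Ordinal hN)) H.
  by rewrite !ffunE.
set wv := fun (x : 'I_2) (i : idx N) =>
  if i == zero_idx N then 1 else if i == e then sgn2 x else 0.
set ef := fun (y : 'I_2) (i : idx N) => / 2 * wv y i.
have Hdot : forall (y : 'I_2) (w : vec N), fdot (ef y) w =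
    / 2 * w (zero_idx N) + / 2 * sgn2 y * w e.
  move=> y w; rewrite /fdot (sumR_two (zero_idx N) e) //.
    by rewrite /ef /wv eqxx (negbTE He0) eqxx; ring.
  by move=> i Hi1 Hi2; rewrite /ef /wv (negbTE Hi1) (negbTE Hi2); ring.
exists 2%N, 2%N, (fun _ => / INR 2), wv, ef.
split.
  split; first by move=> _; rewrite /=; lra.
  by rewrite sumR_const card_ord /=; field.
split.
  move=> x; split; first by rewrite /wv eqxx.
  rewrite (sumR_one e).
    by rewrite (negbTE He0) /wv (negbTE He0) eqxx; have := sgn2_sq x; nra.
  move=> i Hi; rewrite /wv; case: eqP => // _; by rewrite (negbTE Hi); ring.
split.
  move=> y w [Hw0 Hw]; rewrite Hdot Hw0.
  have : (if e == zero_idx N then 0 else w e ^ 2) <= 1.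
    apply: (Rle_trans _ _ _ _ Hw).
    apply: (sumR_single_le e (fun i => if i == zero_idx N then 0 else w i ^ 2)).
    by move=> i; case: eqP => _; nra.
  rewrite (negbTE He0) => Hwe.
  have := sgn2_sq y => Hs.
  have h1 : -1 <= w e <= 1 by split; nra.
  rewrite /sgn2; case: (y == ord0); split; nra.
split.
  move=> a; rewrite /sumR big_ord_recl big_ord_recl big_ord0.
  rewrite /ef /wv /unit_vec.
  case: (a == zero_idx N); first by rewrite /=; field.
  case: (a == e); last by rewrite /=; field.
  rewrite /sgn2 /=; field.
rewrite (MI_perfect 2).
- rewrite /log2; have H := ln2_pos.
  have -> : INR 2 = 2 by rewrite /=; ring.
  field; lra.
- done.
- done.
move=> x y; rewrite Hdot /wv eqxx (negbTE He0) eqxx.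
have := sgn2_prod y x; rewrite eq_sym; case: (x == y) => H; lra.
Qed.


Theorem mainTheorem11 (N : nat) (hN : (0 < N)%nat) :
  (OmegaAB (phi (zero_idx N)) /\ (forall x : idx N, AllowedT (Tmu x)) /\
   (forall y : idx N, EffectAB (Emu y)) /\
   (forall a, sumR (fun y : idx N => Emu y a) = @unitAB N a)) /\
  (forall x y : idx N,
     mdot (Emu y) (applyA (Tmu x) (phi (zero_idx N))) = if x == y then 1 else 0) /\
  (forall b, is_upper_bound (achC_AB N) b -> forall c, achDC N c -> c <= b) /\
  (forall b, is_upper_bound (achDC N) b -> INR N <= b) /\
  is_lub (achC_A N) 1 /\
  ((3 <= N)%nat ->
    (forall a, is_lub (achC_A N) a -> exists c, achDC N c /\ 2 * a < c) /\
    (forall a b, is_lub (achC_A N) a -> is_lub (achC_A N) b ->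
       exists c, achC_AB N c /\ a + b < c)).
Proof.
have Hlub : is_lub (achC_A N) 1.
  split; first by move=> c; apply: achC_A_le1.
  by move=> b Hb; apply: Hb; apply: achC_A_one.
have Hlub1 : forall a, is_lub (achC_A N) a -> a = 1.
  move=> a [Ha1 Ha2]; have := Ha2 _ (proj1 Hlub); have := proj2 Hlub _ Ha1; lra.
have HN3 : (3 <= N)%nat -> 2 < INR N.
  move=> H; have : (2 < N)%coq_nat by apply/ltP.
  move/lt_INR; rewrite /=; lra.
split.
  split.
    exists 1%N, (fun _ => 1), (fun _ => phi (zero_idx N)).
    split; first by move=> _; lra.
    split; first by rewrite sumR_const card_ord /=; ring.
    split; first by move=> _; right; exists (zero_idx N).
    by move=> a; rewrite sumR_const card_ord /= !Rmult_1_l.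
  split.
    move=> x; exists 1%N, (fun _ => 1), (fun _ => Tmu x).
    split; first by move=> _; lra.
    split; first by rewrite sumR_const card_ord /=; ring.
    split; first by move=> _; exists x.
    by move=> a; rewrite sumR_const card_ord /= !Rmult_1_l.
  split; first by move=> y; apply: Emu_effect.
  exact: Emu_sum.
split; first exact: protocol_delta.
split; first by move=> b Hb c Hc; apply: Hb; apply: achDC_achC.
split; first by move=> b Hb; apply: Hb; apply: achDC_N.
split; first exact: Hlub.
move=> H3; split.
  move=> a Ha; rewrite (Hlub1 a Ha); exists (INR N); split; first exact: achDC_N.
  have := HN3 H3; lra.
move=> a b Ha Hb; rewrite (Hlub1 a Ha) (Hlub1 b Hb).
exists (INR N); split; first by apply: achDC_achC; apply: achDC_N.
have := HN3 H3; lra.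
Qed.
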